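(* Let $n\ge 2$. The set $\mathcal B=\{[in|jn] : i,j\in[n-1]\}$ is a lattice basis of the Veronese lattice $L_n=\ker_{\mathbb{Z}}(V_n)\subset\mathbb{Z}^{\binom{n+1}{2}}$.
   Context: $[n]=\{1,\dots,n\}$. $\mathbb{Z}^{\binom{n+1}{2}}$ has standard basis $e_{ij}$, $1\le i\le j\le n$, with the convention $e_{ij}=e_{ji}$. For $i,j,k,l\in[n]$, $[ij|kl]:=e_{ik}+e_{jl}-e_{il}-e_{jk}$ (note $[in|jn]=[jn|in]$). $V_n$ is the $n\times\binom{n+1}{2}$ integer matrix whose column indexed by $jk$ is $e_j+e_k\in\mathbb{Z}^n$. *)

(* Defs.v *)
From mathcomp Require Import all_boot all_order all_algebra.
Set Implicit Arguments. Unset Strict Implicit. Unset Printing Implicit Defensive.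
Import Order.TTheory GRing.Theory Num.Theory.
Local Open Scope ring_scope.

(* Coordinates of Z^{binom(n+1,2)}: unordered pairs {j,k} of elements of
   [n] (here 0-based 'I_n), represented as (j,k) with j <= k. *)
Definition idx (n : nat) := {p : 'I_n * 'I_n | (p.1 <= p.2)%N}.

Definition vec (n : nat) := {ffun idx n -> int}.

Definition npair n (i j : 'I_n) : 'I_n * 'I_n :=
  if (i <= j)%N then (i, j) else (j, i).

Definition e n (i j : 'I_n) : vec n :=
  [ffun p : idx n => ((val p == npair i j) : nat)%:Z].

(* [ij|kl] := e_ik + e_jl - e_il - e_jk *)
Definition bracket n (i j k l : 'I_n) : vec n :=
  e i k + e j l - e i l - e j k.

(* V_n v, where the column of V_n indexed by jk is e_j + e_k *)
Definition Vn n (v : vec n) : 'I_n -> int := fun m =>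
  \sum_(p : idx n) ((((val p).1 == m) : nat)%:Z + (((val p).2 == m) : nat)%:Z) * v p.

Definition veronese_lattice (n : nat) : pred (vec n) := fun v => [forall m, Vn v m == 0].

Definition lattice_basis n (S : vec n -> Prop) (L : pred (vec n)) : Prop :=
  [/\ (forall v, S v -> L v),
      (forall v, L v -> exists (s : seq (vec n)) (c : vec n -> int),
          [/\ uniq s, (forall b, b \in s -> S b) & v = \sum_(b <- s) (b *~ c b)])
    & (forall (s : seq (vec n)) (c : vec n -> int),
          uniq s -> (forall b, b \in s -> S b) ->
          \sum_(b <- s) (b *~ c b) = 0 -> forall b, b \in s -> c b = 0)].

Lemma lastI_subproof n : (1 < n)%N -> (n.-1 < n)%N.
Proof. by case: n. Qed.

(* the element n of [n], i.e. index n-1 of 'I_n *)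
Definition lastI n (hn : (1 < n)%N) : 'I_n := Ordinal (lastI_subproof hn).

Definition Bset n (hn : (1 < n)%N) : vec n -> Prop := fun v =>
  exists i j : 'I_n, [/\ (i < n.-1)%N, (j < n.-1)%N & v = bracket i (lastI hn) j (lastI hn)].

(* Main.v *)
Require Import Defs.
From mathcomp Require Import all_boot all_order all_algebra.
From mathcomp Require Import zify ring.
Set Implicit Arguments. Unset Strict Implicit. Unset Printing Implicit Defensive.
Import Order.TTheory GRing.Theory Num.Theory.
Local Open Scope ring_scope.

Section Aux.
Variable n : nat.
Implicit Types (v w : vec n) (p q : idx n).

Lemma VnD v w m : Vn (v + w) m = Vn v m + Vn w m.
Proof. by rewrite /Vn -big_split /=; apply: eq_bigr => p _; rewrite ffunE mulrDr. Qed.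

Lemma VnN v m : Vn (- v) m = - Vn v m.
Proof. by rewrite /Vn -sumrN; apply: eq_bigr => p _; rewrite ffunE mulrN. Qed.

Lemma VnZ v z m : Vn (v *~ z) m = Vn v m * z.
Proof. by rewrite /Vn mulr_suml; apply: eq_bigr => p _; rewrite ffunMzE mulrzz mulrA. Qed.

Lemma Vn_sum (I : Type) (r : seq I) (F : I -> vec n) m :
  Vn (\sum_(b <- r) F b) m = \sum_(b <- r) Vn (F b) m.
Proof.
rewrite /Vn; under eq_bigr do rewrite sum_ffunE big_distrr.
by rewrite exchange_big.
Qed.

Lemma npair_le (i j : 'I_n) : ((npair i j).1 <= (npair i j).2)%N.
Proof. rewrite /npair; case: ifP => //= /negbT; rewrite -ltnNge => /ltnW //. Qed.

Lemma Ve (i j m : 'I_n) : Vn (e i j) m = ((i == m) : nat)%:Z + ((j == m) : nat)%:Z.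
Proof.
pose q : idx n := exist _ (npair i j) (npair_le i j).
rewrite /Vn (bigD1 q) //= big1 ?addr0.
  rewrite ffunE eqxx mulr1 /npair; case: ifP => //= _; by rewrite addrC.
move=> p hp; rewrite ffunE.
have -> : (val p == npair i j) = false.
  by apply/negbTE; apply: contra hp => /eqP h; apply/eqP; apply: val_inj.
by rewrite mulr0.
Qed.

Lemma Vbracket (i j k l m : 'I_n) : Vn (bracket i j k l) m = 0.
Proof.
rewrite /bracket !(VnD, VnN) !Ve.
lia.
Qed.

Lemma idx_eq p q : nat_of_ord (val p).1 = (val q).1 -> nat_of_ord (val p).2 = (val q).2 -> p = q.
Proof.
case: p => [[a b] hp]; case: q => [[c d] hq] /= h1 h2.
apply: val_inj => /=; congr pair; exact: val_inj.
Qed.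

Lemma e_sym (a b : 'I_n) : e a b = e b a.
Proof.
rewrite /e /npair; case: (leqP a b) => h1; case: (leqP b a) => h2 //.
  have -> : a = b by apply: val_inj; apply/eqP; rewrite eqn_leq h1 h2.
  by [].
exfalso; lia.
Qed.

End Aux.

Section Main.
Variable n : nat.
Variable hn : (1 < n)%N.
Implicit Types (v w : vec n) (p q : idx n).

Lemma vanish w : (forall m, Vn w m = 0) ->
  (forall p, ((val p).2 < n.-1)%N -> w p = 0) -> w = 0.
Proof.
move=> hw hw0.
have step1 : forall p, ((val p).1 < n.-1)%N -> w p = 0.
  move=> p hp1; case: (ltnP (val p).2 n.-1) => h2; first exact: hw0.
  have e2 : nat_of_ord (val p).2 = n.-1 by have := ltn_ord (val p).2; lia.
  have := hw (val p).1; rewrite /Vn (bigD1 p) //= big1 ?addr0.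
    rewrite eqxx; case: eqP => [/(congr1 (@nat_of_ord n)) E|_] /=.
      have E' : nat_of_ord (val p).2 = nat_of_ord (val p).1 := E. lia.
    lia.
  move=> q hq; case: (ltnP (val q).2 n.-1) => hq2; first by rewrite hw0 // mulr0.
  have eq2 : nat_of_ord (val q).2 = n.-1 by have := ltn_ord (val q).2; lia.
  case: eqP => [/(congr1 (@nat_of_ord n)) E|_].
    by case/negP: hq; apply/eqP; apply: idx_eq => //; rewrite eq2 e2.
  case: eqP => [/(congr1 (@nat_of_ord n)) E|_].
    have E' : nat_of_ord (val q).2 = nat_of_ord (val p).1 := E. lia.
  by rewrite mul0r.
apply/ffunP => p; rewrite ffunE.
case: (ltnP (val p).1 n.-1) => h1; first exact: step1.
have e1 : nat_of_ord (val p).1 = n.-1 by have := ltn_ord (val p).1; have := valP p; lia.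
have hv : ((val p).1 <= (val p).2)%N := valP p.
have e2 : nat_of_ord (val p).2 = n.-1 by have := ltn_ord (val p).2; lia.
have := hw (val p).1; rewrite /Vn (bigD1 p) //= big1 ?addr0.
  rewrite eqxx; case: eqP => [_|H] /=; last by exfalso; apply: H; apply: ord_inj; rewrite e1 e2.
  move=> H. have H2 : 2 * w p = 0 := H. move/eqP: H2; rewrite mulf_eq0 => /orP [//|/eqP //].
move=> q hq; rewrite step1 ?mulr0 //.
case: (ltnP (val q).1 n.-1) => // hq1.
have hvq : ((val q).1 <= (val q).2)%N := valP q.
have := ltn_ord (val q).1; have := ltn_ord (val q).2 => *.
case/negP: hq; apply/eqP; apply: idx_eq; rewrite ?e1 ?e2; lia.
Qed.


Definition B (q : idx n) : vec n := bracket (val q).1 (Defs.lastI hn) (val q).2 (Defs.lastI hn).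

Lemma Beval q p : ((val q).2 < n.-1)%N -> ((val p).2 < n.-1)%N ->
  B q p = ((p == q) : nat)%:Z.
Proof.
move=> hq hp.
have hvq : ((val q).1 <= (val q).2)%N := valP q.
have F : forall x : 'I_n, (val p == (x, Defs.lastI hn)) = false.
  move=> x; apply/negbTE/eqP => E.
  have : nat_of_ord (val p).2 = n.-1 by rewrite E.
  move: hp; case: (val p) => a b /= ? ?; lia.
have hN : nat_of_ord (Defs.lastI hn) = n.-1 by [].
have h1 : ((val q).1 <= Defs.lastI hn)%N by rewrite hN; lia.
have h2 : ((val q).2 <= Defs.lastI hn)%N by rewrite hN; lia.
have h3 : (Defs.lastI hn <= (val q).2)%N = false by apply/negbTE; rewrite hN -ltnNge.
rewrite /B /bracket !ffunE /npair hvq h1 h3 leqnn !F !subr0 .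
have -> : (val p == ((val q).1, (val q).2)) = (p == q).
  by case: q {hq hvq h1 h2 h3 F} => [[a b] hq].
by [].
Qed.

Lemma Bset_B q : ((val q).2 < n.-1)%N -> Bset hn (B q).
Proof.
move=> hq; have hvq : ((val q).1 <= (val q).2)%N := valP q.
exists (val q).1, (val q).2; split => //; lia.
Qed.

Lemma Bset_ex v : Bset hn v -> exists q, ((val q).2 < n.-1)%N /\ v = B q.
Proof.
case=> i [j [hi hj ->]]; case: (leqP i j) => hij.
  by exists (exist _ (i, j) hij); split.
exists (exist (fun x : 'I_n * 'I_n => (x.1 <= x.2)%N) (j, i) (ltnW hij)); split => //=.
rewrite /B /bracket /= (e_sym i j) (e_sym (Defs.lastI hn) j) (e_sym i (Defs.lastI hn)).
exact: addrAC.
Qed.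

Definition P : pred (idx n) := fun q => ((val q).2 < n.-1)%N.

Lemma sum_delta (f : idx n -> int) q0 : P q0 ->
  \sum_(q | P q) ((q == q0) : nat)%:Z * f q = f q0.
Proof.
move=> h; rewrite (bigD1 q0) //= eqxx mul1r big1 ?addr0 //.
by move=> q /andP[_ /negbTE ->]; rewrite mul0r.
Qed.

End Main.

Theorem lemma2p1 (n : nat) (hn : (1 < n)%N) :
  @lattice_basis n (Bset hn) (@veronese_lattice n).
Proof.
have kerE : forall v : vec n, veronese_lattice v <-> (forall m, Vn v m = 0).
  by move=> v; split => [/forallP h m | h]; [apply/eqP; exact: h | apply/forallP => m; apply/eqP].
have BinL : forall v, Bset hn v -> forall m, Vn v m = 0.
  by move=> v [i [j [_ _ ->]]] m; exact: Vbracket.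
split.
- by move=> v /BinL /kerE.
- move=> v /kerE hv.
  exists (map (B hn) (enum (@P n))), (fun b => \sum_(q | @P n q) b q * v q); split.
  + rewrite map_inj_in_uniq ?enum_uniq // => q1 q2; rewrite !mem_enum => h1 h2 E.
    have := Beval hn h1 h1; rewrite E Beval // eqxx.
    by case: eqP.
  + by move=> b /mapP [q]; rewrite mem_enum => hq ->; exact: Bset_B.
  + apply/eqP; rewrite -subr_eq0; apply/eqP; apply: (vanish hn).
    * move=> m; rewrite VnD VnN Vn_sum hv big1_seq ?subrr //.
      move=> b /andP [_ /mapP [q _ ->]]; by rewrite VnZ Vbracket mul0r.
    * move=> p hp; rewrite !ffunE sum_ffunE big_map big_enum /=.
      rewrite (eq_bigr (fun q => ((q == p) : nat)%:Z * v q)); last first.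
        move=> q hq; rewrite ffunMzE mulrzz Beval // eq_sym; congr (_ * _).
        rewrite (eq_bigr (fun q' => ((q' == q) : nat)%:Z * v q')).
          exact: sum_delta.
        by move=> q' hq'; rewrite Beval.
      by rewrite sum_delta // subrr.
- move=> s c us hs hsum b hb.
  have [q0 [hq0 eb]] := Bset_ex (hs b hb).
  have := congr1 (fun f : vec n => f q0) hsum; rewrite /= sum_ffunE ffunE.
  rewrite (eq_big_seq (fun b' => ((b' == b) : nat)%:Z * c b')); last first.
    move=> b' hb'; rewrite ffunMzE mulrzz; congr (_ * _).
    have [q' [hq' eb']] := Bset_ex (hs b' hb').
    rewrite eb' Beval //; case: (eqVneq q0 q') => [<-|nq]; first by rewrite -eb eqxx.
    case: eqP => // E; move: (Beval hn hq0 hq0); rewrite -eb -E Beval // eqxx (negbTE nq).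
    by move/eqP.
  rewrite (big_rem b) //= eqxx mul1r big1_seq ?addr0 //.
  move=> b' /andP [_]; rewrite mem_rem_uniq // => /andP [nb _].
  by rewrite (negbTE nb) mul0r.
Qed.
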